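(* Let $H_{OK}=[h_1\cdots h_{18}]=[I_9\ M_{OK}]$ be the $9\times18$ binary matrix, where $I_9$ is the identity matrix ($h_i$ the $i$-th unit vector for $i\le9$) and $h_{10},\dots,h_{18}$ are, in order, the columns given in hexadecimal as 1A0, 174, A5, 173, 17, E8, 9, 18D, 1CE (each written as a 9-bit binary string, most significant bit as the top entry). Let $\mathcal P_{OK}$ be the partition of the column indices into the 11 subsets $\{1,2,4\},\{3\},\{5,8\},\{6,17\},\{7,10\},\{11,14\},\{12\},\{13,18\},\{15\},\{9\},\{16\}$. Then $\mathcal P_{OK}$ is a $(3,1)$-partition of $H_{OK}$: every vector of $\mathbb{F}_2^9$, including the zero vector, is the sum of at least one and at most three columns of $H_{OK}$ lying in pairwise distinct subsets of $\mathcal P_{OK}$. Moreover the $[18,9]_2$ code with parity-check matrix $H_{OK}$ has minimum distance $3$ and covering radius $3$ (so it is an $[18,9,3]_23,1$ code).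
   Context: For an $r\times n$ binary parity-check matrix $H$ and $0\le\ell\le R$, an $(R,\ell)$-partition is a partition of the columns of $H$ into nonempty subsets such that every vector of $\mathbb{F}_2^r$ (including zero) is the sum of at least $\ell$ and at most $R$ columns of $H$ lying in pairwise distinct subsets. An $[n,n-r,d]_2R,\ell$ code is a binary linear code of length $n$, codimension $r$, minimum distance $d$, covering radius $R$ (smallest $R$ such that every vector of $\mathbb{F}_2^r$ is a sum of at most $R$ columns of $H$), some parity-check matrix of which admits an $(R,\ell)$-partition. *)

(* Defs.v *)
From mathcomp Require Import all_boot all_order all_algebra.
Set Implicit Arguments. Unset Strict Implicit. Unset Printing Implicit Defensive.
Import GRing.Theory.
Local Open Scope ring_scope.

Definition colsum (r n : nat) (H : 'M['F_2]_(r, n)) (S : {set 'I_n}) : 'cV['F_2]_r :=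
  \sum_(j in S) col j H.

(* (R,l)-partition: P is a partition of the column indices into nonempty blocks
   (finset's [partition] includes [set0 \notin P]) such that every vector of F_2^r
   (zero included) is the sum of at least l and at most R columns lying in
   pairwise distinct blocks. *)
Definition is_RL_partition (r n : nat) (H : 'M['F_2]_(r, n))
  (P : {set {set 'I_n}}) (R l : nat) : Prop :=
  partition P [set: 'I_n] /\
  forall v : 'cV['F_2]_r, exists S : {set 'I_n},
    [/\ (l <= #|S| <= R)%N,
        {in S &, forall i j, i != j -> pblock P i != pblock P j}
      & colsum H S = v].

Definition wt (n : nat) (x : 'rV['F_2]_n) : nat := #|[set j | x 0 j != 0]|.

Definition is_codeword (r n : nat) (H : 'M['F_2]_(r, n)) (x : 'rV['F_2]_n) : Prop :=
  H *m x^T = 0.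

Definition min_distance (r n : nat) (H : 'M['F_2]_(r, n)) (d : nat) : Prop :=
  (exists x : 'rV['F_2]_n, [/\ x != 0, is_codeword H x & wt x = d]) /\
  (forall x : 'rV['F_2]_n, x != 0 -> is_codeword H x -> (d <= wt x)%N).

Definition covers_within (r n : nat) (H : 'M['F_2]_(r, n)) (R : nat) : Prop :=
  forall v : 'cV['F_2]_r, exists S : {set 'I_n}, (#|S| <= R)%N /\ colsum H S = v.

Definition covering_radius (r n : nat) (H : 'M['F_2]_(r, n)) (R : nat) : Prop :=
  covers_within H R /\ forall R', (R' < R)%N -> ~ covers_within H R'.

(* hex columns 1A0,174,A5,173,17,E8,9,18D,1CE in decimal *)
Definition hexcols : seq nat := [:: 416; 372; 165; 371; 23; 232; 9; 397; 462]%N.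

(* H_OK = [I_9 M_OK]; row 0 is the top entry = most significant bit (2^8). *)
Definition H_OK : 'M['F_2]_(9, 18) :=
  \matrix_(i < 9, j < 18)
    if (j < 9)%N then ((i : nat) == (j : nat))%:R
    else (odd (nth 0%N hexcols (j - 9) %/ 2 ^ (8 - i)))%:R.

Definition blk (s : seq nat) : {set 'I_18} := [set j : 'I_18 | (j : nat) \in s].

(* 0-based version of {1,2,4},{3},{5,8},{6,17},{7,10},{11,14},{12},{13,18},{15},{9},{16} *)
Definition P_OK : {set {set 'I_18}} :=
  [set blk [:: 0; 1; 3]%N; blk [:: 2]%N; blk [:: 4; 7]%N; blk [:: 5; 16]%N;
       blk [:: 6; 9]%N; blk [:: 10; 13]%N; blk [:: 11]%N; blk [:: 12; 17]%N;
       blk [:: 14]%N; blk [:: 8]%N; blk [:: 15]%N].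

(* Main.v *)
Require Import Defs.
From mathcomp Require Import all_boot all_order all_algebra.
Set Warnings "-all".
Set Implicit Arguments. Unset Strict Implicit. Unset Printing Implicit Defensive.
Import GRing.Theory.
Local Open Scope ring_scope.

Lemma F2E (x : 'F_2) : x = (x != 0)%:R.
Proof. by case: x => [[|[|]]] //= ?; apply/val_inj. Qed.
Lemma F2add (a b : bool) : (a%:R + b%:R : 'F_2) = (a (+) b)%:R.
Proof. by case: a; case: b; apply/val_inj. Qed.
Lemma F2inj (a b : bool) : (a%:R : 'F_2) = b%:R -> a = b.
Proof. by case: a; case: b => // /(congr1 val). Qed.

Definition hcn (j i : nat) : bool :=
  if (j < 9)%N then i == j else odd (nth 0%N hexcols (j - 9) %/ 2 ^ (8 - i)).

Lemma H_OKE i j : H_OK i j = (hcn j i)%:R.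
Proof. by rewrite mxE /hcn; case: ifP. Qed.

Definition xs (l : seq nat) (i : nat) : bool := foldr (fun j acc => hcn j i (+) acc) false l.

Lemma sum_colE (so : seq 'I_18) :
  \sum_(j <- so) col j H_OK = \col_i (xs (map val so) i)%:R.
Proof.
elim: so => [|a so IH]; apply/matrixP => i k.
  by rewrite big_nil !mxE.
have colH : col a H_OK i k = (hcn a i)%:R by rewrite [LHS]mxE H_OKE.
by rewrite big_cons mxE IH colH [X in _ + X]mxE mxE F2add.
Qed.

Lemma colsum_seq (so : seq 'I_18) : uniq so ->
  colsum H_OK [set x in so] = \col_i (xs (map val so) i)%:R.
Proof.
move=> u; rewrite /colsum -sum_colE big_uniq //.
by apply: eq_bigl => j; rewrite inE.
Qed.

Definition bl (v : 'cV['F_2]_9) : seq bool := map (fun k => v (inord k) 0 != 0) (iota 0 9).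

Lemma vE v : v = \col_i (nth false (bl v) i)%:R.
Proof.
apply/matrixP => i k; rewrite mxE (ord1 k) (nth_map 0%N) ?size_iota //.
by rewrite nth_iota // add0n inord_val; apply: F2E.
Qed.

Fixpoint bits k : seq (seq bool) :=
  if k is k'.+1 then [seq b :: t | b <- [:: false; true], t <- bits k'] else [:: [::]].
Lemma mem_bits l : l \in bits (size l).
Proof.
elim: l => [|b l IH] //; apply/allpairsP; exists (b, l) => /=; split => //.
by case: b.
Qed.

Fixpoint tups m k : seq (seq nat) :=
  if k is k'.+1 then [seq a :: t | a <- iota 0 m, t <- tups m k'] else [:: [::]].
Lemma mem_tups m l : all (fun a => a < m)%N l -> l \in tups m (size l).
Proof.
elim: l => [|a l IH] // /andP [ha hl]; apply/allpairsP; exists (a, l) => /=; split => //.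
  by rewrite mem_iota.
exact: IH.
Qed.

Lemma iotaP m (P : pred nat) : all P (iota 0 m) -> forall j, (j < m)%N -> P j.
Proof. by move/allP => h j hj; apply: h; rewrite mem_iota. Qed.

Definition bls : seq (seq nat) :=
  [:: [:: 0; 1; 3]; [:: 2]; [:: 4; 7]; [:: 5; 16]; [:: 6; 9]; [:: 10; 13]; [:: 11];
      [:: 12; 17]; [:: 14]; [:: 8]; [:: 15]]%N.
Definition bidn (j : nat) : nat := nth 0%N [:: 0; 0; 1; 0; 2; 3; 4; 2; 9; 4; 5; 6; 7; 5; 8; 10; 3; 7]%N j.

Definition table : seq (seq nat) := [::[:: 5; 8; 15]; [:: 8]; [:: 7]; [:: 7; 8]; [:: 6]; [:: 6; 8]; [:: 6; 7]; [:: 4; 13]; [:: 5]; [:: 15]; [:: 5; 7]; [:: 7; 15]; [:: 5; 6]; [:: 6; 15]; [:: 4; 13; 15]; [:: 4; 5; 13]; [:: 4]; [:: 4; 8]; [:: 6; 8; 13]; [:: 6; 13]; [:: 4; 6]; [:: 7; 13]; [:: 8; 13]; [:: 13]; [:: 4; 5]; [:: 4; 15]; [:: 6; 13; 15]; [:: 5; 6; 13]; [:: 4; 5; 6]; [:: 4; 6; 15]; [:: 13; 15]; [:: 5; 13]; [:: 3]; [:: 3; 8]; [:: 3; 7]; [:: 3; 7; 8]; [:: 3; 6]; [:: 1; 11]; [:: 0; 14; 17]; [:: 1; 7; 11]; [:: 3; 5]; [:: 3; 15]; [:: 3; 5; 7]; [:: 3; 7; 15]; [:: 1; 11; 15]; [::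 9; 16]; [:: 2; 9; 17]; [:: 7; 9; 16]; [:: 3; 4]; [:: 3; 4; 8]; [:: 1; 11; 13]; [:: 0; 2; 12]; [:: 0; 2; 10]; [:: 1; 4; 11]; [:: 3; 8; 13]; [:: 3; 13]; [:: 3; 4; 5]; [:: 3; 4; 15]; [:: 1; 10; 17]; [:: 9; 12; 14]; [:: 9; 10; 14]; [:: 4; 9; 16]; [:: 3; 13; 15]; [:: 3; 5; 13]; [:: 2]; [:: 2; 8]; [:: 2; 7]; [:: 16; 17]; [:: 2; 6]; [:: 2; 6; 8]; [:: 2; 6; 7]; [:: 2; 4; 13]; [:: 2; 5]; [:: 2; 15]; [:: 2; 5; 7]; [:: 2; 7; 15]; [:: 2; 5; 6]; [:: 11; 14]; [:: 3; 9; 17]; [:: 7; 11; 14]; [:: 2; 4]; [:: 2; 4; 8]; [:: 10; 14; 17]; [:: 1; 9; 12]; [:: 1; 9; 10]; [:: 2; 7; 13]; [:: 2; 8; 13]; [:: 2; 13]; [:: 2; 4; 5]; [:: 2; 4; 15]; [:: 11; 13; 14]; [:: 11; 12; 16]; [:: 10; 11; 16]; [:: 4; 11; 14]; [:: 2; 13; 15]; [:: 2; 5; 13]; [:: 2; 3]; [:: 1; 14; 15]; [:: 2; 3; 7]; [:: 0; 4; 12]; [:: 0; 4; 10]; [:: 0; 14; 16]; [:: 5; 9; 17]; [:: 9; 15; 17]; [:: 1; 14]; [:: 1; 8; 14]; [:: 1; 7; 14]; [:: 0; 11; 17]; [:: 1; 6; 14]; [:: 2; 9; 16]; [:: 9;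 17]; [:: 8; 9; 17]; [:: 0; 6; 10]; [:: 0; 7; 12]; [:: 0; 8; 12]; [:: 0; 12]; [:: 0; 10]; [:: 0; 8; 10]; [:: 0; 7; 10]; [:: 0; 6; 12]; [:: 1; 4; 14]; [:: 1; 10; 16]; [:: 0; 12; 15]; [:: 0; 5; 12]; [:: 0; 5; 10]; [:: 0; 10; 15]; [:: 1; 12; 16]; [:: 1; 13; 14]; [:: 1]; [:: 1; 8]; [:: 1; 7]; [:: 1; 7; 8]; [:: 1; 6]; [:: 3; 11]; [:: 1; 6; 7]; [:: 1; 4; 13]; [:: 1; 5]; [:: 1; 15]; [:: 1; 5; 7]; [:: 1; 7; 15]; [:: 0; 8; 16]; [:: 0; 16]; [:: 0; 2; 17]; [:: 0; 7; 16]; [:: 1; 4]; [:: 1; 4; 8]; [:: 3; 11; 13]; [:: 1; 6; 13]; [:: 1; 4; 6]; [:: 1; 7; 13]; [:: 1; 8; 13]; [:: 1; 13]; [:: 1; 4; 5]; [:: 1; 4; 15]; [:: 0; 13; 16]; [:: 0; 12; 14]; [:: 0; 10; 14]; [:: 0; 4; 16]; [:: 1; 13; 15]; [:: 1; 5; 13]; [:: 0; 9]; [:: 6; 11]; [:: 0; 7; 9]; [:: 6; 7; 11]; [:: 8; 11]; [:: 11]; [:: 7; 8; 11]; [:: 7; 11]; [:: 2; 14]; [:: 0; 9; 15]; [:: 2; 7; 14]; [:: 14; 16; 17]; [:: 11; 15]; [:: 5; 11]; [:: 7; 11; 15]; [:: 5; 7; 11]; [:: 0; 4; 9]; [:: 4;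 6; 11]; [:: 11; 13]; [:: 8; 11; 13]; [:: 4; 8; 11]; [:: 4; 11]; [:: 6; 11; 13]; [:: 0; 9; 13]; [:: 2; 4; 14]; [:: 2; 10; 16]; [:: 10; 17]; [:: 8; 10; 17]; [:: 4; 11; 15]; [:: 4; 5; 11]; [:: 2; 12; 16]; [:: 2; 13; 14]; [:: 1; 2]; [:: 1; 2; 8]; [:: 1; 2; 7]; [:: 1; 16; 17]; [:: 1; 2; 6]; [:: 2; 3; 11]; [:: 0; 5; 17]; [:: 0; 15; 17]; [:: 3; 14]; [:: 1; 2; 15]; [:: 0; 6; 17]; [:: 9; 11; 17]; [:: 0; 7; 17]; [:: 0; 2; 16]; [:: 0; 17]; [:: 0; 8; 17]; [:: 1; 2; 4]; [:: 0; 10; 11]; [:: 8; 9; 12]; [:: 9; 12]; [:: 9; 10]; [:: 8; 9; 10]; [:: 0; 11; 12]; [:: 1; 2; 13]; [:: 3; 4; 14]; [:: 0; 13; 17]; [:: 9; 12; 15]; [:: 5; 9; 12]; [:: 5; 9; 10]; [:: 9; 10; 15]; [:: 0; 4; 17]; [:: 3; 13; 14]; [:: 5; 14]; [:: 14; 15]; [:: 5; 7; 14]; [:: 7; 14; 15]; [:: 2; 8; 11]; [:: 2; 11]; [:: 11; 16; 17]; [:: 2; 7; 11]; [:: 14]; [:: 8; 14]; [:: 7; 14]; [:: 7; 8; 14]; [:: 6; 14]; [:: 2; 5; 11]; [:: 1; 9; 17]; [:: 4; 13; 14]; [:: 4; 5; 14]; [:: 4; 14; 15]; [:: 2; 11;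 13]; [:: 3; 9; 12]; [:: 3; 9; 10]; [:: 2; 4; 11]; [:: 13; 14; 15]; [:: 5; 13; 14]; [:: 4; 14]; [:: 10; 16]; [:: 2; 10; 17]; [:: 6; 13; 14]; [:: 4; 6; 14]; [:: 6; 10; 16]; [:: 12; 16]; [:: 13; 14]; [:: 0]; [:: 0; 8]; [:: 0; 7]; [:: 0; 7; 8]; [:: 0; 6]; [:: 9; 11]; [:: 0; 6; 7]; [:: 0; 4; 13]; [:: 0; 5]; [:: 0; 15]; [:: 0; 5; 7]; [:: 0; 7; 15]; [:: 0; 5; 6]; [:: 1; 16]; [:: 1; 2; 17]; [:: 1; 7; 16]; [:: 0; 4]; [:: 0; 4; 8]; [:: 9; 11; 13]; [:: 0; 6; 13]; [:: 0; 4; 6]; [:: 0; 7; 13]; [:: 0; 8; 13]; [:: 0; 13]; [:: 0; 4; 5]; [:: 0; 4; 15]; [:: 1; 13; 16]; [:: 1; 12; 14]; [:: 1; 10; 14]; [:: 1; 4; 16]; [:: 0; 13; 15]; [:: 0; 5; 13]; [:: 1; 9]; [:: 1; 8; 9]; [:: 1; 7; 9]; [:: 2; 4; 12]; [:: 2; 4; 10]; [:: 2; 14; 16]; [:: 14; 17]; [:: 8; 14; 17]; [:: 11; 16]; [:: 1; 9; 15]; [:: 7; 11; 16]; [:: 2; 11; 17]; [:: 6; 11; 16]; [:: 0; 9; 16]; [:: 5; 14; 17]; [:: 14; 15; 17]; [:: 1; 4; 9]; [:: 2; 7; 12]; [:: 2; 8; 12]; [:: 2; 12]; [:: 2; 10];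 [:: 2; 8; 10]; [:: 2; 7; 10]; [:: 1; 9; 13]; [:: 4; 11; 16]; [:: 10; 11; 14]; [:: 2; 12; 15]; [:: 2; 5; 12]; [:: 2; 5; 10]; [:: 2; 10; 15]; [:: 11; 12; 14]; [:: 11; 13; 16]; [:: 0; 2]; [:: 0; 2; 8]; [:: 0; 2; 7]; [:: 0; 16; 17]; [:: 0; 2; 6]; [:: 2; 9; 11]; [:: 1; 5; 17]; [:: 1; 15; 17]; [:: 9; 14]; [:: 0; 2; 15]; [:: 1; 6; 17]; [:: 3; 11; 17]; [:: 1; 7; 17]; [:: 0; 11; 14]; [:: 1; 17]; [:: 1; 8; 17]; [:: 0; 2; 4]; [:: 1; 10; 11]; [:: 3; 8; 12]; [:: 3; 12]; [:: 3; 10]; [:: 3; 8; 10]; [:: 1; 11; 12]; [:: 0; 2; 13]; [:: 4; 9; 14]; [:: 1; 13; 17]; [:: 3; 12; 15]; [:: 3; 5; 12]; [:: 3; 5; 10]; [:: 3; 10; 15]; [:: 1; 4; 17]; [:: 9; 13; 14]; [:: 1; 2; 9]; [:: 6; 14; 16]; [:: 4; 8; 12]; [:: 4; 12]; [:: 4; 10]; [:: 14; 16]; [:: 2; 14; 17]; [:: 4; 6; 12]; [:: 2; 11; 16]; [:: 7; 11; 17]; [:: 4; 12; 15]; [:: 11; 17]; [:: 4; 5; 10]; [:: 4; 10; 15]; [:: 0; 9; 17]; [:: 6; 11; 17]; [:: 6; 10]; [:: 7; 12]; [:: 8; 12]; [:: 12]; [:: 10]; [:: 8; 10]; [:: 7;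 10]; [:: 6; 12]; [:: 5; 6; 10]; [:: 5; 7; 12]; [:: 12; 15]; [:: 5; 12]; [:: 5; 10]; [:: 10; 15]; [:: 5; 7; 10]; [:: 5; 6; 12]; [:: 3; 9]; [:: 3; 8; 9]; [:: 3; 7; 9]; [:: 11; 14; 17]; [:: 15; 16]; [:: 1; 9; 11]; [:: 2; 5; 17]; [:: 2; 15; 17]; [:: 3; 5; 9]; [:: 6; 16]; [:: 2; 6; 17]; [:: 4; 12; 14]; [:: 8; 16]; [:: 16]; [:: 2; 17]; [:: 7; 16]; [:: 3; 4; 9]; [:: 2; 10; 11]; [:: 12; 14; 15]; [:: 5; 12; 14]; [:: 4; 15; 16]; [:: 10; 14; 15]; [:: 2; 11; 12]; [:: 3; 9; 13]; [:: 6; 10; 14]; [:: 2; 13; 17]; [:: 13; 16]; [:: 12; 14]; [:: 10; 14]; [:: 4; 16]; [:: 2; 4; 17]; [:: 6; 12; 14]; [:: 9]; [:: 8; 9]; [:: 7; 9]; [:: 7; 8; 9]; [:: 0; 8; 11]; [:: 0; 11]; [:: 1; 14; 17]; [:: 0; 7; 11]; [:: 5; 9]; [:: 9; 15]; [:: 5; 7; 9]; [:: 7; 9; 15]; [:: 0; 11; 15]; [:: 3; 16]; [:: 2; 3; 17]; [:: 3; 7; 16]; [:: 4; 9]; [:: 4; 8; 9]; [:: 0; 11; 13]; [:: 1; 2; 12]; [:: 1; 2; 10]; [:: 0; 4; 11]; [:: 8; 9; 13]; [:: 9; 13]; [:: 4; 5; 9]; [:: 4; 9; 15]; [:: 0;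 10; 17]; [:: 3; 12; 14]; [:: 3; 10; 14]; [:: 3; 4; 16]; [:: 9; 13; 15]; [:: 5; 9; 13]; [:: 2; 3; 9]; [:: 4; 10; 11]; [:: 5; 6; 17]; [:: 6; 15; 17]; [:: 2; 15; 16]; [:: 7; 15; 17]; [:: 5; 17]; [:: 15; 17]; [:: 1; 9; 14]; [:: 2; 6; 16]; [:: 6; 17]; [:: 6; 8; 17]; [:: 7; 17]; [:: 2; 16]; [:: 17]; [:: 8; 17]; [:: 8; 10; 11]; [:: 10; 11]; [:: 6; 11; 12]; [:: 0; 9; 12]; [:: 0; 9; 10]; [:: 6; 10; 11]; [:: 11; 12]; [:: 4; 15; 17]; [:: 8; 13; 17]; [:: 13; 17]; [:: 2; 13; 16]; [:: 2; 12; 14]; [:: 2; 10; 14]; [:: 2; 4; 16]; [:: 4; 17]; [:: 4; 8; 17]; [:: 2; 9]; [:: 0; 14; 15]; [:: 2; 7; 9]; [:: 1; 4; 12]; [:: 1; 4; 10]; [:: 0; 2; 11]; [:: 3; 5; 17]; [:: 3; 15; 17]; [:: 0; 14]; [:: 0; 8; 14]; [:: 0; 7; 14]; [:: 1; 11; 17]; [:: 0; 6; 14]; [:: 2; 3; 16]; [:: 3; 17]; [:: 3; 8; 17]; [:: 1; 6; 10]; [:: 1; 7; 12]; [:: 1; 8; 12]; [:: 1; 12]; [:: 1; 10]; [:: 1; 8; 10]; [:: 1; 7; 10]; [:: 1; 6; 12]; [:: 0; 4; 14]; [:: 0; 10; 16]; [:: 1; 12; 15]; [:: 1; 5; 12];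 [:: 1; 5; 10]; [:: 1; 10; 15]; [:: 0; 12; 16]; [:: 0; 13; 14]]%N.

Definition code (l : seq bool) : nat := foldl (fun acc (b : bool) => acc.*2 + b)%N 0%N l.
Definition wit (l : seq bool) : seq nat := nth [::] table (code l).
Definition good (l : seq bool) : bool :=
  let s := wit l in
  [&& (0 < size s <= 3)%N, uniq s, all (fun j => j < 18)%N s,
      all (fun i => all (fun j => (i == j) || (bidn i != bidn j)) s) s
    & all (fun i => xs s i == nth false l i) (iota 0 9)].

Lemma good_all : all good (bits 9).
Proof. by vm_compute. Qed.

Lemma fact_bid : all (fun j => j \in nth [::] bls (bidn j)) (iota 0 18).
Proof. by vm_compute. Qed.
Lemma fact_bid2 : all (fun i => all (fun k => (i \in nth [::] bls k) ==> (bidn i == k)) (iota 0 11)) (iota 0 18).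
Proof. by vm_compute. Qed.
Lemma fact_disj : all (fun a => all (fun b => (a == b) || all (fun x => x \notin nth [::] bls b) (nth [::] bls a)) (iota 0 11)) (iota 0 11).
Proof. by vm_compute. Qed.
Lemma fact_ne : all (fun k => head 0%N (nth [::] bls k) \in nth [::] bls k) (iota 0 11).
Proof. by vm_compute. Qed.
Lemma fact_bidlt : all (fun j => bidn j < 11)%N (iota 0 18).
Proof. by vm_compute. Qed.
Definition l0 := [:: false; false; false; false; false; true; true; true; false].
Lemma fact_cov : all (fun k => all (fun s => has (fun i => xs s i != nth false l0 i) (iota 0 9)) (tups 18 k)) (iota 0 3).
Proof. by vm_compute. Qed.
Lemma fact_md : all (fun k => all (fun s => ~~ uniq s || (s == [::]) || has (fun i => xs s i) (iota 0 9)) (tups 18 k)) (iota 0 3).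
Proof. by vm_compute. Qed.
Lemma fact_w3 : all (fun i => ~~ xs [:: 5; 8; 15]%N i) (iota 0 9).
Proof. by vm_compute. Qed.

Lemma memP A : A \in P_OK -> exists2 k, (k < 11)%N & A = blk (nth [::] bls k).
Proof.
move=> h; have: A \in [seq blk (nth [::] bls k) | k <- iota 0 11].
  by move: h; rewrite /P_OK !inE /= -!orbA.
move/mapP => [k]; rewrite mem_iota => /andP [_ hk] ->; by exists k.
Qed.

Lemma inP k : (k < 11)%N -> blk (nth [::] bls k) \in P_OK.
Proof.
rewrite /P_OK.
do 11 (case: k => [_|k]; first by rewrite !inE eqxx ?orbT).
by [].
Qed.

Lemma inblk (j : 'I_18) : j \in blk (nth [::] bls (bidn j)).
Proof. by rewrite inE; apply: (iotaP fact_bid). Qed.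

Lemma blk_disj a b : (a < 11)%N -> (b < 11)%N -> a != b ->
  [disjoint blk (nth [::] bls a) & blk (nth [::] bls b)].
Proof.
move=> ha hb nab; have := iotaP (iotaP fact_disj ha) hb; rewrite (negbTE nab) /= => /allP h.
rewrite disjoint_subset; apply/subsetP => x; rewrite !inE => xa.
exact: h.
Qed.

Lemma triv_OK : trivIset P_OK.
Proof.
apply/trivIsetP => A B /memP [a ha ->] /memP [b hb ->] nAB.
apply: blk_disj => //; apply: contraNneq nAB => ->; by [].
Qed.

Lemma part_OK : partition P_OK [set: 'I_18].
Proof.
apply/and3P; split; last first.
- apply/negP => /memP [k hk e].
  have hin := iotaP fact_ne hk.
  have hlt : (head 0%N (nth [::] bls k) < 18)%N.
    by apply: (iotaP (_ : all (fun k => head 0%N (nth [::] bls k) < 18)%N (iota 0 11)) hk); vm_compute.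
  have : (Ordinal hlt) \in blk (nth [::] bls k) by rewrite inE.
  by rewrite -e inE.
- exact: triv_OK.
- apply/eqP/setP => j; rewrite inE; apply/bigcupP.
  exists (blk (nth [::] bls (bidn j))); last exact: inblk.
  by apply: inP; apply: (iotaP fact_bidlt).
Qed.

Lemma pblockE (j : 'I_18) : pblock P_OK j = blk (nth [::] bls (bidn j)).
Proof. apply: def_pblock; [exact: triv_OK | | exact: inblk]. by apply: inP; apply: (iotaP fact_bidlt). Qed.

Lemma pblock_ne (i j : 'I_18) : bidn i != bidn j -> pblock P_OK i != pblock P_OK j.
Proof.
move=> ne; rewrite !pblockE; apply/negP => /eqP e.
have := inblk i; rewrite e inE => hi.
have := iotaP (iotaP fact_bid2 (ltn_ord i)) (iotaP fact_bidlt (ltn_ord j)).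
by rewrite hi /= (negbTE ne).
Qed.

Lemma part1 : is_RL_partition H_OK P_OK 3 1.
Proof.
split; first exact: part_OK.
move=> v.
have hg : good (bl v) by apply: (allP good_all); have := mem_bits (bl v); rewrite size_map size_iota.
move: hg; rewrite /good; set s := wit (bl v).
case/and5P => hsz hu hlt hb hx.
set so := map (@inord 17) s.
have vso : map val so = s.
  rewrite -map_comp; apply: map_id_in => j hj /=; rewrite inordK //; exact: (allP hlt).
have uso : uniq so by rewrite -(map_inj_uniq val_inj) vso.
exists [set x in so]; split.
- by rewrite cardsE (card_uniqP uso) -(size_map val) vso.
- move=> i j; rewrite !inE => hi hj nij; apply: pblock_ne.
  have hi' : val i \in s by rewrite -vso map_f.
  have hj' : val j \in s by rewrite -vso map_f.
  by have := allP (allP hb _ hi') _ hj'; rewrite (inj_eq val_inj) (negbTE nij).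
- rewrite colsum_seq // vso [RHS]vE; apply/matrixP => i k; rewrite !mxE.
  by rewrite (eqP (iotaP hx (ltn_ord i))).
Qed.

Lemma mulE (x : 'rV['F_2]_18) : H_OK *m x^T = colsum H_OK [set j | x 0 j != 0].
Proof.
apply/matrixP => i k; rewrite /colsum summxE mxE [RHS]big_mkcond /=.
apply: eq_bigr => j _; rewrite inE !mxE (ord1 k).
have [->|nz] := eqVneq (x 0 j) 0; first by rewrite mulr0.
by rewrite [x 0 j]F2E nz mulr1.
Qed.

Lemma enumS (S : {set 'I_18}) : colsum H_OK S = \col_i (xs (map val (enum S)) i)%:R.
Proof. by rewrite -colsum_seq ?enum_uniq // set_enum. Qed.

Lemma tups_enum (S : {set 'I_18}) : map val (enum S) \in tups 18 #|S|.
Proof.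
rewrite cardE -(size_map val); apply: mem_tups.
apply/allP => a /mapP [j _ ->]; exact: ltn_ord.
Qed.

Definition w3 : seq 'I_18 := [:: inord 5; inord 8; inord 15].

Lemma part2 : min_distance H_OK 3.
Proof.
have vw : map val w3 = [:: 5; 8; 15]%N by rewrite /= !inordK.
have uw : uniq w3 by rewrite -(map_inj_uniq val_inj) vw.
have Sw : [set j | (\row_j' ((j' \in w3) : nat)%:R : 'rV['F_2]_18) 0 j != 0] = [set x in w3].
  by apply/setP => j; rewrite !in_set mxE; case: (j \in w3).
split.
  exists (\row_j ((j \in w3) : nat)%:R); split.
  - apply/eqP => /matrixP /(_ 0 (inord 5)); rewrite !mxE inE eqxx /=.
    by move/(congr1 val).
  - rewrite /is_codeword mulE Sw colsum_seq // vw; apply/matrixP => i k.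
    by rewrite !mxE (negbTE (iotaP fact_w3 (ltn_ord i))).
  - by rewrite /wt Sw cardsE (card_uniqP uw).
move=> x nz cw; rewrite leqNgt; apply/negP => hlt.
set S := [set j | x 0 j != 0].
have hS : colsum H_OK S = 0 by rewrite -mulE.
have hk : (#|S| < 3)%N by [].
have := iotaP fact_md hk => /allP /(_ _ (tups_enum S)).
rewrite map_inj_uniq ?enum_uniq //; last exact: val_inj.
case/orP => [/eqP e|].
  move/eqP: nz; apply; apply/matrixP => i j; rewrite (ord1 i) mxE.
  apply/eqP; apply: contraT => h.
  have : j \in enum S by rewrite mem_enum inE.
  by rewrite -(mem_map val_inj) e.
move/hasP => [i]; rewrite mem_iota add0n => /andP [_ hi].
move: hS; rewrite enumS => /matrixP /(_ (Ordinal hi) 0); rewrite !mxE /=.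
by move=> h1 h2; move: h1; rewrite h2 => /(congr1 val).
Qed.

Lemma part3 : covering_radius H_OK 3.
Proof.
split.
  move=> v; have [S [/andP [_ h1] _ h3]] := (proj2 part1) v; by exists S.
move=> R' hR hc.
have [S [hS e]] := hc (\col_i (nth false l0 i)%:R).
have hk : (#|S| < 3)%N by apply: leq_ltn_trans hR.
have := iotaP fact_cov hk => /allP /(_ _ (tups_enum S)).
move/hasP => [i]; rewrite mem_iota add0n => /andP [_ hi].
move: e; rewrite enumS => /matrixP /(_ (Ordinal hi) 0); rewrite !mxE /=.
by move/F2inj => ->; rewrite eqxx.
Qed.

Theorem theorem7p1 :
  is_RL_partition H_OK P_OK 3 1 /\ min_distance H_OK 3 /\ covering_radius H_OK 3.
Proof. by split; [exact: part1 | split; [exact: part2 | exact: part3]]. Qed.
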